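(* Let $f:\mathbb{R}^n\times\mathbb{R}^m\to\mathbb{R}$ be twice continuously differentiable, $\mu$-strongly convex in $x$ for every fixed $y$ and $\mu$-strongly concave in $y$ for every fixed $x$ ($\mu>0$). Write $z=(x;y)$ and $F(z)=(\nabla_x f(x,y);-\nabla_y f(x,y))$. Assume the largest singular value of the Jacobian $\nabla F(z)$ is at most $L$ for all $z$, and that $\|\nabla F(z)-\nabla F(z')\|\le L_2\|z-z'\|$ for all $z,z'$. Let $m(z)=\frac12\|F(z)\|^2$. Fix $z^0$, let $\mathcal{Z}=\{z: m(z)\le m(z^0)\}$ and $D=\max\{\|z-z^0\|: z\in\mathcal{Z}\}$. Then for all $z,z'\in\mathcal{Z}$, $$\|\nabla m(z)-\nabla m(z')\|\le L_m\|z-z'\|\qquad\text{with } L_m=L^2+L_2LD.$$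
   Context: $\|\cdot\|$ denotes the Euclidean norm for vectors and the largest singular value for matrices. $\nabla m(z)=\nabla F(z)^\top F(z)$. *)

(* Defs.v *)
From HB Require Import structures.
From mathcomp Require Import all_boot all_order all_algebra.
From mathcomp Require Import all_classical all_reals all_analysis.
Set Implicit Arguments. Unset Strict Implicit. Unset Printing Implicit Defensive.
Import Order.TTheory GRing.Theory Num.Theory.
Import numFieldNormedType.Exports.
Local Open Scope classical_set_scope.
Local Open Scope ring_scope.

Section Defs.
Variable R : realType.

Definition vnorm k (v : 'cV[R]_k) : R := Num.sqrt (\sum_i v i ord0 ^+ 2).

(* largest singular value = operator norm induced by the Euclidean norms *)
Definition opnorm p q (A : 'M[R]_(p, q)) : R :=
  sup [set vnorm (A *m v) | v in [set v : 'cV[R]_q | vnorm v <= 1]].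

Definition evec k (i : 'I_k) : 'cV[R]_k := delta_mx i ord0.

Definition pderiv k (g : 'cV[R]_k -> R) (i : 'I_k) (z : 'cV[R]_k) : R :=
  'D_(evec i) g z.

Definition C2 k (g : 'cV[R]_k -> R) : Prop :=
  (forall z, differentiable g z) /\
  (forall i z, differentiable (pderiv g i) z) /\
  (forall i j, continuous (pderiv (pderiv g i) j)).

Definition strongly_convex k (h : 'cV[R]_k -> R) (mu : R) : Prop :=
  forall (a b : 'cV[R]_k) (t : R), 0 <= t <= 1 ->
    h (t *: a + (1 - t) *: b) <=
      t * h a + (1 - t) * h b - mu / 2 * t * (1 - t) * vnorm (a - b) ^+ 2.

Variables n m : nat.
Implicit Type f : 'cV[R]_n -> 'cV[R]_m -> R.

Definition fz f (z : 'cV[R]_(n + m)) : R := f (usubmx z) (dsubmx z).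

(* F(z) = (grad_x f(x,y); - grad_y f(x,y)) *)
Definition Fop f (z : 'cV[R]_(n + m)) : 'cV[R]_(n + m) :=
  \col_(i < n + m) ((if fintype.split i is inl _ then 1 else -1) * pderiv (fz f) i z).

Definition JF f (z : 'cV[R]_(n + m)) : 'M[R]_(n + m) :=
  \matrix_(i, j) pderiv (fun w => Fop f w i ord0) j z.

Definition merit f (z : 'cV[R]_(n + m)) : R := 2^-1 * vnorm (Fop f z) ^+ 2.

(* nabla m(z) = nabla F(z)^T F(z) (as in the paper's context) *)
Definition gradm f (z : 'cV[R]_(n + m)) : 'cV[R]_(n + m) :=
  (JF f z)^T *m Fop f z.

End Defs.

(* Main.v *)
Require Import Defs.
From HB Require Import structures.
From mathcomp Require Import all_boot all_order all_algebra.
From mathcomp Require Import all_classical all_reals all_analysis.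
From mathcomp Require Import ring lra.
Set Implicit Arguments. Unset Strict Implicit. Unset Printing Implicit Defensive.
Import Order.TTheory GRing.Theory Num.Theory.
Import numFieldNormedType.Exports.
Local Open Scope classical_set_scope.
Local Open Scope ring_scope.

Section LA.
Variable R : realType.

Definition dotv k (u v : 'cV[R]_k) : R := \sum_i u i ord0 * v i ord0.

Lemma sq_le (x y : R) : 0 <= y -> x ^+ 2 <= y ^+ 2 -> x <= y.
Proof. move=> y0 h; rewrite !expr2 in h; nra. Qed.

Lemma dotvv_ge0 k (v : 'cV[R]_k) : 0 <= dotv v v.
Proof. by apply: sumr_ge0 => i _; rewrite -expr2 sqr_ge0. Qed.

Lemma vnorm_ge0 k (v : 'cV[R]_k) : 0 <= vnorm v.
Proof. exact: sqrtr_ge0. Qed.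

Lemma vnorm_sq k (v : 'cV[R]_k) : vnorm v ^+ 2 = dotv v v.
Proof.
rewrite /vnorm sqr_sqrtr; last by apply: sumr_ge0 => i _; rewrite sqr_ge0.
by apply: eq_bigr => i _; rewrite expr2.
Qed.

Lemma dotvC k (u v : 'cV[R]_k) : dotv u v = dotv v u.
Proof. by apply: eq_bigr => i _; rewrite mulrC. Qed.

Lemma dotvDl k (u u' v : 'cV[R]_k) : dotv (u + u') v = dotv u v + dotv u' v.
Proof. by rewrite /dotv -big_split; apply: eq_bigr => i _; rewrite mxE mulrDl. Qed.

Lemma dotvDr k (u v v' : 'cV[R]_k) : dotv u (v + v') = dotv u v + dotv u v'.
Proof. by rewrite dotvC dotvDl !(dotvC u). Qed.

Lemma dotvZl k c (u v : 'cV[R]_k) : dotv (c *: u) v = c * dotv u v.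
Proof. by rewrite /dotv mulr_sumr; apply: eq_bigr => i _; rewrite mxE mulrA. Qed.

Lemma dotvZr k c (u v : 'cV[R]_k) : dotv u (c *: v) = c * dotv u v.
Proof. by rewrite dotvC dotvZl dotvC. Qed.

Lemma dotvNl k (u v : 'cV[R]_k) : dotv (- u) v = - dotv u v.
Proof. by rewrite -scaleN1r dotvZl mulN1r. Qed.

Lemma dotvNr k (u v : 'cV[R]_k) : dotv u (- v) = - dotv u v.
Proof. by rewrite dotvC dotvNl dotvC. Qed.

Lemma dotvBl k (u u' v : 'cV[R]_k) : dotv (u - u') v = dotv u v - dotv u' v.
Proof. by rewrite dotvDl dotvNl. Qed.

Lemma dotvBr k (u v v' : 'cV[R]_k) : dotv u (v - v') = dotv u v - dotv u v'.
Proof. by rewrite dotvDr dotvNr. Qed.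

Lemma dotv0 k (u : 'cV[R]_k) : dotv u 0 = 0.
Proof. by rewrite /dotv big1 // => i _; rewrite mxE mulr0. Qed.

Lemma dotvv_eq0 k (u : 'cV[R]_k) : dotv u u = 0 -> u = 0.
Proof.
move=> /eqP; rewrite psumr_eq0 => [/allP h|i _]; last by rewrite -expr2 sqr_ge0.
apply/matrixP => i j; rewrite ord1 mxE.
have := h i (mem_index_enum _); rewrite -expr2 sqrf_eq0 => /eqP //.
Qed.

Lemma CS k (u v : 'cV[R]_k) : dotv u v <= vnorm u * vnorm v.
Proof.
set a := vnorm u; set b := vnorm v.
have a0 : 0 <= a := vnorm_ge0 u. have b0 : 0 <= b := vnorm_ge0 v.
have h : 0 <= dotv (b *: u - a *: v) (b *: u - a *: v) := dotvv_ge0 _.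
rewrite !(dotvBl, dotvBr, dotvZl, dotvZr) -!vnorm_sq -/a -/b (dotvC v u) in h.
have [a0'|] := eqVneq a 0.
  have : dotv u u = 0 by rewrite -vnorm_sq -/a a0' expr2 mulr0.
  by move=> /dotvv_eq0 ->; rewrite /dotv big1 ?mulr_ge0 // => i _; rewrite mxE mul0r.
have [b0'|] := eqVneq b 0.
  have : dotv v v = 0 by rewrite -vnorm_sq -/b b0' expr2 mulr0.
  by move=> /dotvv_eq0 ->; rewrite dotv0 mulr_ge0.
move=> bn an.
have ab : 0 < a * b by rewrite mulr_gt0 // lt_def ?an ?bn.
rewrite !expr2 in h.
nra.
Qed.

Lemma vnorm_triangle k (u v : 'cV[R]_k) : vnorm (u + v) <= vnorm u + vnorm v.
Proof.
apply: sq_le; first by rewrite addr_ge0 ?vnorm_ge0.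
rewrite vnorm_sq dotvDl !dotvDr (dotvC v u) sqrrD !vnorm_sq.
have := CS u v; lra.
Qed.

Lemma vnormZ k c (v : 'cV[R]_k) : vnorm (c *: v) = `|c| * vnorm v.
Proof.
rewrite /vnorm -sqrtr_sqr -sqrtrM ?sqr_ge0 // mulr_sumr; congr Num.sqrt.
by apply: eq_bigr => i _; rewrite mxE exprMn.
Qed.

Lemma vnormN k (v : 'cV[R]_k) : vnorm (- v) = vnorm v.
Proof. by rewrite -scaleN1r vnormZ normrN1 mul1r. Qed.

Lemma vnormB k (u v : 'cV[R]_k) : vnorm (u - v) = vnorm (v - u).
Proof. by rewrite -vnormN opprB. Qed.

Lemma vnorm0 k : vnorm (0 : 'cV[R]_k) = 0.
Proof. by rewrite -(scale0r 0) vnormZ normr0 mul0r. Qed.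

End LA.

Section OP.
Variable R : realType.

Lemma CS2 k (u v : 'cV[R]_k) : dotv u v ^+ 2 <= dotv u u * dotv v v.
Proof.
have h1 := CS u v; have h2 := CS (- u) v.
rewrite dotvNl vnormN in h2.
rewrite -!vnorm_sq -exprMn.
have := vnorm_ge0 u; have := vnorm_ge0 v.
rewrite !expr2; nra.
Qed.

Lemma vnorm0P k (v : 'cV[R]_k) : vnorm v = 0 -> v = 0.
Proof. by move=> h; apply: dotvv_eq0; rewrite -vnorm_sq h expr2 mulr0. Qed.

Lemma mulmx_dot p q (A : 'M[R]_(p, q)) v i : (A *m v) i ord0 = dotv (row i A)^T v.
Proof. by rewrite mxE; apply: eq_bigr => j _; rewrite !mxE. Qed.

Lemma opnorm_has_sup p q (A : 'M[R]_(p, q)) :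
  has_sup [set vnorm (A *m v) | v in [set v : 'cV[R]_q | vnorm v <= 1]].
Proof.
split; first by exists (vnorm (A *m 0)), 0 => //=; rewrite vnorm0 ler01.
exists (Num.sqrt (\sum_i dotv (row i A)^T (row i A)^T)) => _ [v /= v1 <-].
apply: sq_le; first exact: sqrtr_ge0.
rewrite [X in _ <= X]sqr_sqrtr; last by apply: sumr_ge0 => i _; exact: dotvv_ge0.
rewrite vnorm_sq; apply: ler_sum => i _.
rewrite mulmx_dot -expr2.
apply: (le_trans (CS2 _ _)).
have vv : dotv v v <= 1.
  rewrite -vnorm_sq expr2; have := vnorm_ge0 v; nra.
have := dotvv_ge0 (row i A)^T; have := dotvv_ge0 v; nra.
Qed.

Lemma opnorm_ge0 p q (A : 'M[R]_(p, q)) : 0 <= opnorm A.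
Proof.
have := sup_upper_bound (opnorm_has_sup A); apply.
by exists 0 => //=; rewrite ?vnorm0 ?ler01 // mulmx0 vnorm0.
Qed.

Lemma opnorm_le p q (A : 'M[R]_(p, q)) v : vnorm (A *m v) <= opnorm A * vnorm v.
Proof.
have [h|hn] := eqVneq (vnorm v) 0.
  by rewrite (vnorm0P h) mulmx0 vnorm0 vnorm0 mulr0.
have vp : 0 < vnorm v by rewrite lt_def hn vnorm_ge0.
have /= H := sup_upper_bound (opnorm_has_sup A).
have : vnorm (A *m ((vnorm v)^-1 *: v)) <= opnorm A.
  apply: H; exists ((vnorm v)^-1 *: v) => //=.
  by rewrite vnormZ ger0_norm ?invr_ge0 ?vnorm_ge0 // mulVf.
rewrite -scalemxAr vnormZ ger0_norm ?invr_ge0 ?vnorm_ge0 // => h.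
by rewrite -ler_pdivrMr // mulrC.
Qed.

Lemma dotv_tr p q (A : 'M[R]_(p, q)) w x : dotv (A^T *m w) x = dotv w (A *m x).
Proof.
rewrite /dotv.
under eq_bigr => i _ do rewrite mxE mulr_suml.
rewrite exchange_big /=; apply: eq_bigr => j _.
rewrite mxE mulr_sumr; apply: eq_bigr => i _; rewrite mxE; ring.
Qed.

Lemma opnorm_tr p q (A : 'M[R]_(p, q)) w : vnorm (A^T *m w) <= opnorm A * vnorm w.
Proof.
set x := A^T *m w.
have h : vnorm x ^+ 2 <= vnorm w * (opnorm A * vnorm x).
  rewrite vnorm_sq {1}/x dotv_tr.
  apply: (le_trans (CS _ _)); apply: ler_wpM2l; first exact: vnorm_ge0.
  exact: opnorm_le.
have [->|xn] := eqVneq (vnorm x) 0; first by rewrite mulr_ge0 ?opnorm_ge0 ?vnorm_ge0.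
have xp : 0 < vnorm x by rewrite lt_def xn vnorm_ge0.
rewrite expr2 mulrA [vnorm w * _]mulrC in h.
by rewrite -(ler_pM2r xp).
Qed.

End OP.

Section AN.
Variable R : realType.

Lemma evec_sum k (v : 'cV[R]_k) : v = \sum_j v j ord0 *: @evec R _ j.
Proof.
rewrite {1}(matrix_sum_delta v); apply: eq_bigr => j _.
by rewrite big_ord1.
Qed.

Lemma dir_pderiv k (g : 'cV[R]_k -> R) p v : differentiable g p ->
  'D_v g p = \sum_j v j ord0 * pderiv g j p.
Proof.
move=> dg; rewrite deriveE // {1}(evec_sum v) linear_sum.
apply: eq_bigr => j _; rewrite linearZ /= /pderiv deriveE //.
Qed.

Lemma line_is_derive k (g : 'cV[R]_k -> R) a v t :
  derivable g (t *: v + a) v ->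
  is_derive t 1 (fun s => g (s *: v + a)) ('D_v g (t *: v + a)).
Proof.
have E : (fun h : R => h^-1 *: ((fun s => g (s *: v + a)) \o shift t) (h *: 1)
     - h^-1 *: g (t *: v + a)) = 
  (fun h : R => h^-1 *: (g \o shift (t *: v + a)) (h *: v) - h^-1 *: g (t *: v + a)).
  by apply: funext => h /=; rewrite -[h *: 1]/(h * 1) mulr1 scalerDl addrA.
move=> dg; split.
  rewrite /derivable; under eq_fun do rewrite scalerBr.
  rewrite E. under eq_fun do rewrite -scalerBr. exact: dg.
rewrite /derive; under eq_fun do rewrite scalerBr.
rewrite E. by under eq_fun do rewrite -scalerBr.
Qed.

End AN.

Section FF.
Variable R : realType.
Variables n m : nat.
Variable f : 'cV[R]_n -> 'cV[R]_m -> R.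
Hypothesis hC2 : C2 (fz f).

Definition sgn (i : 'I_(n + m)) : R := if fintype.split i is inl _ then 1 else -1.

Lemma Fi_fun i : (fun w => Fop f w i ord0) = sgn i \*: pderiv (fz f) i.
Proof. by apply: funext => w; rewrite mxE. Qed.

Lemma Fi_diff i z : differentiable (fun w => Fop f w i ord0) z.
Proof.
rewrite Fi_fun; apply: differentiableZ; case: hC2 => _ [h _]; exact: h.
Qed.

Lemma JF_dir i z v : 'D_v (fun w => Fop f w i ord0) z = (JF f z *m v) i ord0.
Proof.
rewrite dir_pderiv; last exact: Fi_diff.
rewrite mxE; apply: eq_bigr => j _; rewrite mxE mulrC //.
Qed.

Lemma F_lip L a b : (forall z, opnorm (JF f z) <= L) ->
  vnorm (Fop f b - Fop f a) <= L * vnorm (b - a).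
Proof.
move=> hJ.
have L0 : 0 <= L by apply: le_trans (hJ 0); exact: opnorm_ge0.
set d := Fop f b - Fop f a; set v := b - a.
pose h := fun i : 'I_(n + m) => (fun s : R => d i ord0 * Fop f (s *: v + a) i ord0).
pose phi : R -> R := \sum_i h i.
have phiE s : phi s = \sum_i d i ord0 * Fop f (s *: v + a) i ord0.
  by rewrite /phi fct_sumE.
have der (x : R) : is_derive x (1 : R) phi (dotv d (JF f (x *: v + a) *m v)).
  apply: is_derive_eq.
    apply: is_derive_sum => i; rewrite /h.
    apply: is_deriveZ; apply: (line_is_derive (g := fun w => Fop f w i ord0)).
    exact/diff_derivable/Fi_diff.
  by apply: eq_bigr => i _; rewrite JF_dir.
have cont : {within `[0, 1], continuous phi}.
  apply: derivable_within_continuous => x _; exact: (@ex_derive _ _ _ _ _ _ _ (der x)).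
have [c _ hc] := MVT ltr01 (fun x _ => der x) cont.
rewrite !phiE subr0 mulr1 -sumrB in hc.
have dd : dotv d d = dotv d (JF f (c *: v + a) *m v).
  rewrite -hc; apply: eq_bigr => i _.
  by rewrite scale1r scale0r add0r /v subrK /d !mxE mulrBr.
have h1 : vnorm d ^+ 2 <= vnorm d * (L * vnorm v).
  rewrite vnorm_sq dd; apply: (le_trans (CS _ _)).
  apply: ler_wpM2l; first exact: vnorm_ge0.
  apply: (le_trans (opnorm_le _ _)); apply: ler_wpM2r; first exact: vnorm_ge0.
  exact: hJ.
have [->|dn] := eqVneq (vnorm d) 0; first by rewrite mulr_ge0 ?vnorm_ge0.
have dp : 0 < vnorm d by rewrite lt_def dn vnorm_ge0.
by rewrite -(ler_pM2l dp) -expr2.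
Qed.

End FF.

Section LB.
Variable R : realType.

Lemma lim_bound (psi : R -> R) C K : 0 <= K -> derivable psi 0 1 ->
  (forall h, 0 < h < 1 -> psi h - psi 0 <= h * (C - K * (1 - h))) ->
  'D_1 psi 0 <= C - K.
Proof.
move=> K0 dpsi hb.
set q := fun h : R => h^-1 *: ((psi \o shift 0) (h *: 1) - psi 0).
have hc : q @ 0^' --> 'D_1 psi 0 by exact: dpsi.
have hr : q @ 0^'+ --> 'D_1 psi 0.
  move=> A /hc /nbhs_ballP [_ /posnumP[e] xe_A].
  by exists e%:num => //= y xe_y /gt_eqF/negbT/xe_A; exact.
apply/ler_addgt0Pr => e e0.
set del := Num.min (2^-1) (e / (K + 1)).
have del0 : 0 < del by rewrite lt_min invr_gt0 ltr0n divr_gt0 //; lra.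
apply: (cvgr_to_le hr).
near=> h.
have h0 : 0 < h by near: h; exact: nbhs_right_gt.
have hd : h < del by near: h; exact: nbhs_right_lt.
have h1 : h < 1 by apply: (lt_le_trans hd); rewrite ge_min; apply/orP; left; lra.
have hde : h <= e / (K + 1) by apply: ltW; apply: (lt_le_trans hd); rewrite ge_min lexx orbT.
rewrite /q /= -[h *: 1]/(h * 1) mulr1 addr0.
have := hb h; rewrite h0 h1 => /(_ isT) hb'.
rewrite -[_ *: _]/(h^-1 * _).
rewrite ler_pdivrMl //.
have : K * h <= e.
  have K1 : 0 < K + 1 by lra.
  rewrite ler_pdivlMr // in hde.
  nra.
nra.
Unshelve. all: by end_near.
Qed.

End LB.

Section MO.
Variable R : realType.
Variables n m : nat.
Variable f : 'cV[R]_n -> 'cV[R]_m -> R.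
Hypothesis hC2 : C2 (fz f).
Variable mu : R.
Hypothesis mu0 : 0 < mu.

Lemma split_l (i : 'I_n) : fintype.split (lshift m i) = inl i.
Proof. exact: (unsplitK (inl i)). Qed.
Lemma split_r (i : 'I_m) : fintype.split (rshift n i) = inr i.
Proof. exact: (unsplitK (inr i)). Qed.

Lemma fz_diff z : differentiable (fz f) z.
Proof. by case: hC2. Qed.

Lemma dot_Fx (u : 'cV[R]_n) z :
  dotv (col_mx u 0) (Fop f z) = 'D_(col_mx u 0) (fz f) z.
Proof.
rewrite dir_pderiv; last exact: fz_diff.
rewrite /dotv !big_split_ord /=; congr (_ + _).
  by apply: eq_bigr => i _; rewrite !col_mxEu !mxE split_l mul1r.
by apply: eq_bigr => i _; rewrite !col_mxEd !mxE !mul0r.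
Qed.

Lemma dot_Fy (u : 'cV[R]_m) z :
  dotv (col_mx 0 u) (Fop f z) = - 'D_(col_mx 0 u) (fz f) z.
Proof.
rewrite dir_pderiv; last exact: fz_diff.
rewrite /dotv !big_split_ord /= opprD; congr (_ + _).
  by rewrite -sumrN; apply: eq_bigr => i _; rewrite !col_mxEu !mxE !mul0r oppr0.
by rewrite -sumrN; apply: eq_bigr => i _; rewrite !col_mxEd !mxE split_r; ring.
Qed.

Lemma vnorm_col k1 k2 (u : 'cV[R]_k1) (v : 'cV[R]_k2) :
  vnorm (col_mx u v) ^+ 2 = vnorm u ^+ 2 + vnorm v ^+ 2.
Proof.
rewrite !vnorm_sq /dotv big_split_ord /=; congr (_ + _);
  apply: eq_bigr => i _; by rewrite ?col_mxEu ?col_mxEd.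
Qed.

Lemma fo_x z (u : 'cV[R]_n) : strongly_convex (fun x => f x (dsubmx z)) mu ->
  dotv (col_mx u 0) (Fop f z) <=
    f (usubmx z + u) (dsubmx z) - fz f z - mu / 2 * vnorm u ^+ 2.
Proof.
move=> hconv; rewrite dot_Fx.
set w := col_mx u 0.
pose psi := fun s : R => fz f (s *: w + z).
have psiE s : psi s = f (s *: u + usubmx z) (dsubmx z).
  rewrite /psi /fz -[z in s *: w + z]vsubmxK /w scale_col_mx add_col_mx.
  by rewrite col_mxKu col_mxKd scaler0 add0r.
have hd := @line_is_derive R _ (fz f) z w 0 (diff_derivable (v := w) (fz_diff _)).
rewrite scale0r add0r in hd.
rewrite -(@derive_val _ _ _ _ _ _ _ hd).
apply: lim_bound.
- apply: mulr_ge0; last exact: sqr_ge0. by apply: divr_ge0; [exact: ltW|].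
- exact: (@ex_derive _ _ _ _ _ _ _ hd).
move=> s /andP [s0 s1].
rewrite -/(psi s) -/(psi 0) !psiE scale0r add0r.
have := hconv (usubmx z + u) (usubmx z) s.
rewrite (ltW s0) (ltW s1) => /(_ isT).
have -> : s *: (usubmx z + u) + (1 - s) *: usubmx z = s *: u + usubmx z.
  by apply/matrixP => i j; rewrite !mxE; ring.
rewrite [usubmx z + u - _]addrAC subrr add0r /fz.
set A := f _ _; set B := f _ _; set C := f _ _; set N := vnorm u ^+ 2.
move=> h; lra.
Qed.

Lemma fo_y z (u : 'cV[R]_m) : strongly_convex (fun y => - f (usubmx z) y) mu ->
  dotv (col_mx 0 u) (Fop f z) <=
    (- f (usubmx z) (dsubmx z + u) + fz f z) - mu / 2 * vnorm u ^+ 2.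
Proof.
move=> hconv; rewrite dot_Fy.
set w := col_mx 0 u.
have psiE s : fz f (s *: w + z) = f (usubmx z) (s *: u + dsubmx z).
  rewrite /fz -[z in s *: w + z]vsubmxK /w scale_col_mx add_col_mx.
  by rewrite col_mxKu col_mxKd scaler0 add0r.
have hd := @line_is_derive R _ (fz f) z w 0 (diff_derivable (v := w) (fz_diff _)).
rewrite scale0r add0r in hd.
have hd' := is_deriveN hd.
rewrite -(@derive_val _ _ _ _ _ _ _ hd').
apply: lim_bound.
- apply: mulr_ge0; last exact: sqr_ge0. by apply: divr_ge0; [exact: ltW|].
- exact: (@ex_derive _ _ _ _ _ _ _ hd').
move=> s /andP [s0 s1] /=.
change (- fz f (s *: w + z) - - fz f (0 *: w + z) <=
  s * (- f (usubmx z) (dsubmx z + u) + fz f z - mu / 2 * vnorm u ^+ 2 * (1 - s))).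
rewrite !psiE scale0r add0r.
have := hconv (dsubmx z + u) (dsubmx z) s.
rewrite (ltW s0) (ltW s1) => /(_ isT).
have -> : s *: (dsubmx z + u) + (1 - s) *: dsubmx z = s *: u + dsubmx z.
  by apply/matrixP => i j; rewrite !mxE; ring.
rewrite [dsubmx z + u - _]addrAC subrr add0r /fz.
set A := f _ _; set B := f _ _; set C := f _ _; set N := vnorm u ^+ 2.
move=> h; lra.
Qed.

Lemma F_mono (a b : 'cV[R]_(n + m)) :
  (forall y, strongly_convex (fun x => f x y) mu) ->
  (forall x, strongly_convex (fun y => - f x y) mu) ->
  mu * vnorm (b - a) ^+ 2 <= dotv (b - a) (Fop f b - Fop f a).
Proof.
move=> cx cy.
set ux := usubmx (b - a); set uy := dsubmx (b - a).
have h1 := fo_x (z := a) ux (cx _).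
have h2 := fo_x (z := b) (- ux) (cx _).
have h3 := fo_y (z := a) uy (cy _).
have h4 := fo_y (z := b) (- uy) (cy _).
have e1 : usubmx a + ux = usubmx b by rewrite /ux linearB /= addrC subrK.
have e2 : usubmx b + - ux = usubmx a by rewrite /ux linearB /= opprB addrC subrK.
have e3 : dsubmx a + uy = dsubmx b by rewrite /uy linearB /= addrC subrK.
have e4 : dsubmx b + - uy = dsubmx a by rewrite /uy linearB /= opprB addrC subrK.
rewrite e1 in h1; rewrite e2 in h2; rewrite e3 in h3; rewrite e4 in h4.
rewrite vnormN in h2; rewrite vnormN in h4.
have eba : b - a = col_mx ux 0 + col_mx 0 uy by rewrite add_col_mx addr0 add0r vsubmxK.
have eab : - (b - a) = col_mx (- ux) 0 + col_mx 0 (- uy).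
  by rewrite add_col_mx addr0 add0r -opp_col_mx vsubmxK.
have da : dotv (b - a) (Fop f a) = dotv (col_mx ux 0) (Fop f a) + dotv (col_mx 0 uy) (Fop f a).
  by rewrite {1}eba dotvDl.
have db : - dotv (b - a) (Fop f b) = dotv (col_mx (- ux) 0) (Fop f b) + dotv (col_mx 0 (- uy)) (Fop f b).
  by rewrite -dotvNl eab dotvDl.
have nn : vnorm (b - a) ^+ 2 = vnorm ux ^+ 2 + vnorm uy ^+ 2 by rewrite -vnorm_col vsubmxK.
rewrite dotvBr nn.
rewrite /fz in h1 h2 h3 h4.
lra.
Qed.

End MO.

Lemma eg_abs (R : realType) k (A B : 'M[R]_k) (u v : 'cV[R]_k) :
  A^T *m u - B^T *m v = A^T *m (u - v) + (A - B)^T *m v.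
Proof.
have -> : (A - B)^T = A^T - B^T by apply/matrixP => i j; rewrite !mxE.
by rewrite mulmxBl mulmxBr addrA subrK.
Qed.

Unset Implicit Arguments. Set Strict Implicit.

Theorem lemma2p4 (R : realType) (n m : nat)
    (f : 'cV[R]_n -> 'cV[R]_m -> R) (mu L L2 : R) (z0 : 'cV[R]_(n + m)) :
  0 < mu ->
  C2 (fz f) ->
  (forall y, strongly_convex (fun x => f x y) mu) ->
  (forall x, strongly_convex (fun y => - f x y) mu) ->
  (forall z, opnorm (JF f z) <= L) ->
  (forall z z', opnorm (JF f z - JF f z') <= L2 * vnorm (z - z')) ->
  let Z := [set z | merit f z <= merit f z0] in
  let D := sup [set vnorm (z - z0) | z in Z] in
  forall z z', Z z -> Z z' ->
    vnorm (gradm f z - gradm f z') <= (L ^+ 2 + L2 * L * D) * vnorm (z - z').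
Proof.
move=> mu0 hC2 cx cy hJ hJ2 Z D z z' Zz Zz'.
have L0 : 0 <= L by apply: le_trans (hJ 0); exact: opnorm_ge0.
have lip a b := F_lip hC2 a b hJ.
have mono a b := F_mono hC2 mu0 a b cx cy.
set F := Fop f.
have ZF w : Z w -> vnorm (F w) <= vnorm (F z0).
  rewrite /Z /= /merit => hw; apply: sq_le; first exact: vnorm_ge0.
  by rewrite -(ler_pM2l (_ : 0 < 2^-1)) ?invr_gt0 ?ltr0n.
have Zb w : Z w -> vnorm (w - z0) <= 2 * vnorm (F z0) / mu.
  move=> Zw.
  have h1 := mono z0 w.
  have h2 := CS (w - z0) (F w - F z0).
  have h3 : vnorm (F w - F z0) <= 2 * vnorm (F z0).
    apply: (le_trans (vnorm_triangle _ _)); rewrite vnormN.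
    have := ZF w Zw; move: (vnorm (F w)) (vnorm (F z0)); clear; move=> x y; lra.
  rewrite ler_pdivlMr //.
  have [->|wn] := eqVneq (vnorm (w - z0)) 0; first by rewrite mul0r mulr_ge0 ?vnorm_ge0.
  have wp : 0 < vnorm (w - z0) by rewrite lt_def wn vnorm_ge0.
  have h4 : vnorm (w - z0) * vnorm (F w - F z0) <= vnorm (w - z0) * (2 * vnorm (F z0)).
    by apply: ler_wpM2l; [exact: ltW|].
  rewrite -(ler_pM2l wp); rewrite expr2 in h1; nra.
have hs : has_sup [set vnorm (w - z0) | w in Z].
  split. exists (vnorm (z0 - z0)). exists z0. exact: lexx. reflexivity.
  by exists (2 * vnorm (F z0) / mu) => _ [w Zw <-]; exact: Zb.
have ZD w : Z w -> vnorm (w - z0) <= D.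
  by move=> Zw; apply: (sup_upper_bound hs); exists w.
set eta := mu / (L ^+ 2 + mu ^+ 2).
have eta0 : 0 < eta by rewrite divr_gt0 // ltr_wpDl ?sqr_ge0 // exprn_gt0.
have Leta : L ^+ 2 * eta <= mu.
  have s0 : 0 < L ^+ 2 + mu ^+ 2 by rewrite ltr_wpDl ?sqr_ge0 // exprn_gt0.
  rewrite /eta mulrCA -[X in _ <= X]mulr1; apply: ler_wpM2l; first exact: ltW.
  by rewrite ler_pdivrMr // mul1r lerDl sqr_ge0.
set q := Num.max (1 - 2 * mu * eta + L ^+ 2 * eta ^+ 2) (2^-1).
have q1 : q < 1.
  rewrite /q gt_max; apply/andP; split; last by lra.
  have : L ^+ 2 * eta ^+ 2 <= mu * eta.
    by rewrite [eta ^+ 2]expr2 mulrA; apply: ler_wpM2r => //; exact: ltW.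
  have : 0 < mu * eta by rewrite mulr_gt0.
  lra.
have q0 : 0 < q by rewrite /q lt_max; apply/orP; right; lra.
have step w : vnorm (F (w - eta *: F w)) ^+ 2 <= q * vnorm (F w) ^+ 2.
  set w' := w - eta *: F w.
  set d := F w' - F w.
  have ew : w' - w = - (eta *: F w) by rewrite /w' addrAC subrr add0r.
  have h1 := mono w w'. have h2 := lip w w'.
  have ne : `|eta| = eta := ger0_norm (ltW eta0).
  rewrite -/d ew dotvNl dotvZl vnormN vnormZ ne in h1.
  rewrite ew vnormN vnormZ ne in h2.
  have {}h2 : vnorm d <= L * (eta * vnorm (F w)) := h2.
  have eFw : F w' = F w + d by rewrite /d addrC subrK.
  rewrite eFw; clearbody d; rewrite vnorm_sq dotvDl !dotvDr (dotvC d) -!vnorm_sq.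
  have hP : dotv (F w) d <= - (mu * eta) * vnorm (F w) ^+ 2.
    rewrite -(ler_pM2l eta0); rewrite exprMn in h1.
    move: h1; clear -eta0; move=> h1; lra.
  have hQ : vnorm d ^+ 2 <= L ^+ 2 * eta ^+ 2 * vnorm (F w) ^+ 2.
    have := ler_pM (vnorm_ge0 d) (vnorm_ge0 d) h2 h2.
    move: (vnorm d) (vnorm (F w)); clear; move=> x y h; rewrite !expr2; lra.
  have : (1 - 2 * mu * eta + L ^+ 2 * eta ^+ 2) * vnorm (F w) ^+ 2 <= q * vnorm (F w) ^+ 2.
    by rewrite ler_wpM2r ?sqr_ge0 // /q le_max lexx.
  move=> h3; move: hP hQ h3; clear; move=> hP hQ h3; lra.
have Zstep w : Z w -> Z (w - eta *: F w).
  move=> Zw; have := step w; move: Zw; rewrite /Z /= /merit -/F.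
  move: (vnorm (F (w - eta *: F w))) (vnorm (F w)) (vnorm (F z0)) => a b c.
  move: q0 q1; clear; move=> q0 q1 h1 h2.
  have : q * b ^+ 2 <= b ^+ 2 by rewrite ler_piMl ?sqr_ge0 // ltW.
  lra.
set S := [set vnorm (F w) ^+ 2 | w in Z].
have hinf : has_inf S.
  split; first by exists (vnorm (F z0) ^+ 2); exists z0; [exact: lexx | reflexivity].
  by exists 0 => _ [w _ <-]; exact: sqr_ge0.
have c0 : inf S <= 0.
  rewrite leNgt; apply/negP => cpos.
  set c := inf S in cpos *.
  set eps := c * (1 - q) / q.
  have eps0 : 0 < eps by rewrite /eps divr_gt0 // mulr_gt0 // subr_gt0.
  have [_ [w Zw <-] hw] := inf_adherent eps0 hinf.
  have hst := step w.
  have : c <= vnorm (F (w - eta *: F w)) ^+ 2.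
    apply: (ge_inf (proj2 hinf)); exists (w - eta *: F w); [exact: Zstep | reflexivity].
  have e1 : q * (c + eps) = c by rewrite /eps; field; rewrite gt_eqF.
  have e2 : q * vnorm (F w) ^+ 2 < q * (c + eps) by rewrite ltr_pM2l.
  rewrite e1 in e2.
  move=> h3; have := lt_le_trans e2 (le_trans h3 hst); by rewrite ltxx.
have small e : 0 < e -> exists2 w, Z w & vnorm (F w) < e.
  move=> e0.
  have [_ [w Zw <-] hw] := inf_adherent (exprn_gt0 2 e0) hinf.
  exists w => //.
  rewrite ltNge; apply/negP => hle.
  have := ler_pM (ltW e0) (ltW e0) hle hle.
  move: hw c0; rewrite !expr2; move: (inf S) (vnorm (F w)); clear; move=> c x h1 h2 h3.
  lra.
have FLD : vnorm (F z0) <= L * D.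
  apply/ler_addgt0Pr => e e0.
  have [w Zw hw] := small e e0.
  have h1 := lip w z0.
  have h2 : L * vnorm (z0 - w) <= L * D by rewrite vnormB; apply: ler_wpM2l => //; exact: ZD.
  rewrite -[F z0](subrK (F w)).
  apply: (le_trans (vnorm_triangle _ _)).
  move: h1 h2 hw; rewrite -/F.
  move: (vnorm (F z0 - F w)) (vnorm (F w)) (L * vnorm (z0 - w)) (L * D); clear.
  move=> a b c d h1 h2 h3; lra.
have Fz' : vnorm (Fop f z') <= L * D := le_trans (ZF z' Zz') FLD.
clearbody F.
have eg : gradm f z - gradm f z' =
    (JF f z)^T *m (Fop f z - Fop f z') + (JF f z - JF f z')^T *m Fop f z'.
  rewrite /gradm; exact: eg_abs.
rewrite eg; apply: (le_trans (vnorm_triangle _ _)).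
have t1 := opnorm_tr (JF f z) (Fop f z - Fop f z').
have t2 := opnorm_tr (JF f z - JF f z') (Fop f z').
have o1 := hJ z. have o1' := opnorm_ge0 (JF f z).
have o2 := hJ2 z z'. have o2' := opnorm_ge0 (JF f z - JF f z').
have l1 := lip z' z.
have p1 : opnorm (JF f z) * vnorm (Fop f z - Fop f z') <= L * (L * vnorm (z - z')).
  by apply: ler_pM => //; exact: vnorm_ge0.
have p2 : opnorm (JF f z - JF f z') * vnorm (Fop f z') <= (L2 * vnorm (z - z')) * (L * D).
  by apply: ler_pM => //; exact: vnorm_ge0.
rewrite (_ : (L ^+ 2 + L2 * L * D) * vnorm (z - z') =
  L * (L * vnorm (z - z')) + (L2 * vnorm (z - z')) * (L * D)); last by ring.
by apply: lerD; [exact: le_trans t1 p1 | exact: le_trans t2 p2].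
Qed.
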